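(* (1) The function $x\mapsto (2-x)K(x)-2E(x)$ is strictly increasing from $(0,1)$ onto $(0,+\infty)$. (2) For all $0<x<1$, $$(2-x)K(x)-2E(x)\ge \frac2\pi\big(E(x)^2-(1-x)K(x)^2\big).$$
   Context: $K(x)={\cal K}(\sqrt x)$ and $E(x)={\cal E}(\sqrt x)$ for $x\in[0,1)$, where ${\cal K}(r)=\int_0^{\pi/2}(1-r^2\sin^2t)^{-1/2}dt$ and ${\cal E}(r)=\int_0^{\pi/2}(1-r^2\sin^2t)^{1/2}dt$ are the complete elliptic integrals of the first and second kind. *)

(* Defs.v *)
From Stdlib Require Import Reals.
From Coquelicot Require Import Coquelicot.
Open Scope R_scope.

Definition calK (r : R) : R :=
  RInt (fun t => / sqrt (1 - r ^ 2 * sin t ^ 2)) 0 (PI / 2).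
Definition calE (r : R) : R :=
  RInt (fun t => sqrt (1 - r ^ 2 * sin t ^ 2)) 0 (PI / 2).

Definition K (x : R) : R := calK (sqrt x).
Definition E (x : R) : R := calE (sqrt x).

Definition f6 (x : R) : R := (2 - x) * K x - 2 * E x.

(* Main.v *)
Require Import Defs.
From Stdlib Require Import Reals.
From Coquelicot Require Import Coquelicot.
Open Scope R_scope.
From Stdlib Require Import Reals Lra Psatz.
From Coquelicot Require Import Coquelicot.
From Stdlib Require Import ssreflect.

Lemma s_bound t : 0 <= sin t ^ 2 <= 1.
Proof. pose proof (SIN_bound t). simpl. split; nra. Qed.

Lemma wpos x t : x < 1 -> 0 < 1 - x * sin t ^ 2.
Proof. intros Hx. pose proof (s_bound t). destruct (Rle_lt_dec x 0); nra. Qed.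

Lemma exRI (f : R -> R) a b : (forall t, ex_derive f t) -> ex_RInt f a b.
Proof. intros H. apply (ex_RInt_continuous (V:=R_CompleteNormedModule)). intros z _. apply: (ex_derive_continuous (K:=R_AbsRing) (V:=R_NormedModule)). apply H. Qed.

Lemma cpt_of_ex f z : ex_derive f z -> continuity_pt f z.
Proof. intros H. apply continuity_pt_filterlim.
 apply: (ex_derive_continuous (K:=R_AbsRing) (V:=R_NormedModule)). exact H. Qed.

Lemma loc1 x : x < 1 -> locally x (fun y => y < 1).
Proof. intros H. apply (open_lt 1). exact H. Qed.

Lemma param_deriv (phi dphi : R -> R) x :
  (forall w, 0 < w -> is_derive phi w (dphi w)) ->
  (forall w, 0 < w -> continuity_pt dphi w) ->
  x < 1 ->
  is_derive (fun y => RInt (fun t => phi (1 - y * sin t ^ 2)) 0 (PI/2)) x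
    (RInt (fun t => - sin t ^ 2 * dphi (1 - x * sin t ^ 2)) 0 (PI/2)).
Proof.
  intros Hd Hc Hx.
  have Dg : forall u v, u < 1 -> is_derive (fun z => phi (1 - z * sin v ^ 2)) u (- sin v ^ 2 * dphi (1 - u * sin v ^ 2)).
  { intros u v Hu. have H1 := Hd _ (wpos u v Hu).
    have H2 : is_derive (fun z => 1 - z * sin v ^ 2) u (- sin v ^ 2).
    { auto_derive; [done | ring]. }
    have := is_derive_comp phi (fun z => 1 - z * sin v ^ 2) u _ _ H1 H2.
    done. }
  have H := is_derive_RInt_param (fun u t => phi (1 - u * sin t ^ 2)) 0 (PI/2) x.
  have E1 : RInt (fun t => Derive (fun u => phi (1 - u * sin t ^ 2)) x) 0 (PI/2) =
            RInt (fun t => - sin t ^ 2 * dphi (1 - x * sin t ^ 2)) 0 (PI/2).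
  { apply RInt_ext. intros t _. apply is_derive_unique. by apply Dg. }
  rewrite -E1. apply H.
  - apply: filter_imp (loc1 x Hx). intros y Hy t _. eexists. by apply Dg.
  - intros t _.
    apply (continuity_2d_pt_ext_loc (fun u v => - sin v ^ 2 * dphi (1 - u * sin v ^ 2))).
    { have Hp : 0 < 1 - x by lra.
      exists (mkposreal _ Hp). intros u v Hu _. simpl in Hu.
      have Hu1 : u < 1. { apply Rabs_lt_between in Hu. lra. }
      symmetry. apply is_derive_unique. by apply Dg. }
    apply continuity_2d_pt_mult.
    + apply continuity_2d_pt_opp.
      apply (continuity_1d_2d_pt_comp (fun z => sin z ^ 2) (fun u v => v)).
      * apply cpt_of_ex. auto_derive. done.
      * apply continuity_2d_pt_id2.
    + apply (continuity_1d_2d_pt_comp dphi (fun u v => 1 - u * sin v ^ 2)).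
      * apply Hc. by apply wpos.
      * apply continuity_2d_pt_minus. apply continuity_2d_pt_const.
        apply continuity_2d_pt_mult. apply continuity_2d_pt_id1.
        apply (continuity_1d_2d_pt_comp (fun z => sin z ^ 2) (fun u v => v)).
        ** apply cpt_of_ex. auto_derive. done.
        ** apply continuity_2d_pt_id2.
  - apply: filter_imp (loc1 x Hx). intros y Hy.
    apply (ex_RInt_continuous (V:=R_CompleteNormedModule)). intros z _.
    apply: (continuous_comp (fun t => 1 - y * sin t ^ 2) phi).
    + apply: (ex_derive_continuous (K:=R_AbsRing) (V:=R_NormedModule)). auto_derive. done.
    + apply: (ex_derive_continuous (K:=R_AbsRing) (V:=R_NormedModule)).
      eexists. apply Hd. by apply wpos.
Qed.

Lemma dmul f g x df dg : is_derive f x df -> is_derive g x dg ->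
  is_derive (fun y => f y * g y) x (df * g x + f x * dg).
Proof. intros H1 H2. apply: (is_derive_mult f g x df dg H1 H2). intros; apply Rmult_comm. Qed.
Lemma dsub f g x df dg : is_derive f x df -> is_derive g x dg ->
  is_derive (fun y => f y - g y) x (df - dg).
Proof. intros H1 H2. apply: (is_derive_minus f g x df dg H1 H2). Qed.
Lemma dadd f g x df dg : is_derive f x df -> is_derive g x dg ->
  is_derive (fun y => f y + g y) x (df + dg).
Proof. intros H1 H2. apply: (is_derive_plus f g x df dg H1 H2). Qed.

Definition w x t := 1 - x * sin t ^ 2.
Definition Et x := RInt (fun t => sqrt (w x t)) 0 (PI/2).
Definition Kt x := RInt (fun t => / sqrt (w x t)) 0 (PI/2).
Definition Pt x := RInt (fun t => sin t ^ 2 / sqrt (w x t)) 0 (PI/2).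
Definition Qt x := RInt (fun t => sin t ^ 2 / (w x t * sqrt (w x t))) 0 (PI/2).
Definition St x := RInt (fun t => sin t ^ 2 * sqrt (w x t)) 0 (PI/2).
Definition Zt x := RInt (fun t => (1 - 2 * sin t ^ 2 + x * (sin t ^ 2) ^ 2) / (w x t * sqrt (w x t))) 0 (PI/2).
Definition Ss := RInt (fun t => sin t ^ 2) 0 (PI/2).

Lemma RInt_extR (f g : R -> R) a b : (forall x, Rmin a b < x < Rmax a b -> f x = g x) -> RInt f a b = RInt g a b.
Proof. apply RInt_ext. Qed.

Lemma RInt_scal' (f : R -> R) k a b : ex_RInt f a b -> RInt (fun t => k * f t) a b = k * RInt f a b.
Proof. intros H. apply is_RInt_unique. apply: is_RInt_scal. by apply RInt_correct. Qed.

Lemma Et_der x : x < 1 -> is_derive Et x (-(1/2) * Pt x).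
Proof.
  intros Hx. have HD := param_deriv sqrt (fun w => / (2 * sqrt w)) x.
  have -> : -(1/2) * Pt x = RInt (fun t => - sin t ^ 2 * / (2 * sqrt (1 - x * sin t ^ 2))) 0 (PI/2).
  { rewrite /Pt -RInt_scal'.
    - apply RInt_ext => t _. rewrite /w. change (@eq R (- (1 / 2) * (sin t ^ 2 / sqrt (1 - x * sin t ^ 2))) (- sin t ^ 2 * / (2 * sqrt (1 - x * sin t ^ 2)))). field. apply Rgt_not_eq, sqrt_lt_R0. by apply wpos.
    - apply exRI => t. have := wpos x t Hx. rewrite /w => Hw. auto_derive. split; [lra|split;[|done]].
      apply Rgt_not_eq, sqrt_lt_R0; lra. }
  apply: HD => //.
  + intros z Hz. auto_derive. lra. field. apply Rgt_not_eq, sqrt_lt_R0; lra.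
  + intros z Hz. apply cpt_of_ex. auto_derive. split; [lra|split; [|done]].
    apply Rgt_not_eq, Rmult_gt_0_compat; [lra| apply sqrt_lt_R0; lra].
Qed.

Lemma Kt_der x : x < 1 -> is_derive Kt x ((1/2) * Qt x).
Proof.
  intros Hx. have HD := param_deriv (fun w => / sqrt w) (fun w => - / (2 * (w * sqrt w))) x.
  have -> : (1/2) * Qt x = RInt (fun t => - sin t ^ 2 * - / (2 * ((1 - x * sin t ^ 2) * sqrt (1 - x * sin t ^ 2)))) 0 (PI/2).
  { rewrite /Qt -RInt_scal'.
    - apply RInt_extR => t _. rewrite /w. have := wpos x t Hx. rewrite /w => Hw. field. split; [|lra]. apply Rgt_not_eq, sqrt_lt_R0. lra.
    - apply exRI => t. have := wpos x t Hx. rewrite /w => Hw. auto_derive. split; [lra|split;[|done]].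
      apply Rgt_not_eq, Rmult_gt_0_compat; [lra|apply sqrt_lt_R0; lra]. }
  apply: HD => //.
  + intros z Hz. auto_derive. split; [lra|split;[|done]]. apply Rgt_not_eq, sqrt_lt_R0; lra.
    have := sqrt_lt_R0 z Hz => Hs. have := sqrt_sqrt z (Rlt_le _ _ Hz) => Hss.
    field_simplify; try lra. replace (sqrt z ^ 3) with (sqrt z * sqrt z * sqrt z) by ring. rewrite Hss. field. lra.
  + intros z0 Hz0. apply cpt_of_ex. auto_derive. have := sqrt_lt_R0 z0 Hz0 => Hs. split; [lra|split; [|done]].
    apply Rgt_not_eq, Rmult_gt_0_compat; [lra| apply Rmult_gt_0_compat; lra].
Qed.

Ltac pos := match goal with
 | |- _ <> 0 => apply Rgt_not_eq; pos
 | |- _ > 0 => unfold Rgt; pos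
 | |- 0 < _ * _ => apply Rmult_lt_0_compat; pos
 | |- 0 < sqrt _ => apply sqrt_lt_R0; pos
 | |- 0 < / _ => apply Rinv_0_lt_compat; pos
 | |- _ => lra
 end.

Ltac exri x Hx := apply exRI => t; have := wpos x t Hx; rewrite /w => Hw;
  auto_derive; repeat split; try exact I; pos.

Section X.
Variable x : R.
Hypothesis Hx : x < 1.
Lemma exE : ex_RInt (fun t => sqrt (w x t)) 0 (PI/2). Proof. exri x Hx. Qed.
Lemma exK : ex_RInt (fun t => / sqrt (w x t)) 0 (PI/2). Proof. exri x Hx. Qed.
Lemma exP : ex_RInt (fun t => sin t ^ 2 / sqrt (w x t)) 0 (PI/2). Proof. exri x Hx. Qed.
Lemma exQ : ex_RInt (fun t => sin t ^ 2 / (w x t * sqrt (w x t))) 0 (PI/2). Proof. exri x Hx. Qed.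
Lemma exS : ex_RInt (fun t => sin t ^ 2 * sqrt (w x t)) 0 (PI/2). Proof. exri x Hx. Qed.
Lemma exZ : ex_RInt (fun t => (1 - 2 * sin t ^ 2 + x * (sin t ^ 2) ^ 2) / (w x t * sqrt (w x t))) 0 (PI/2). Proof. exri x Hx. Qed.

Lemma Zt0 : Zt x = 0.
Proof.
  rewrite /Zt.
  have H := is_RInt_derive (fun t => sin t * cos t / sqrt (w x t))
     (fun t => (1 - 2 * sin t ^ 2 + x * (sin t ^ 2) ^ 2) / (w x t * sqrt (w x t))) 0 (PI/2).
  rewrite (is_RInt_unique _ _ _ _ (H _ _)).
  - rewrite /minus /plus /opp /=. rewrite sin_0 cos_PI2. rewrite /Rdiv; ring.

  - intros t _. have := wpos x t Hx. rewrite /w => Hw. auto_derive. repeat split; try exact I; pos.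
    replace (1 + - (x * (sin t * (sin t * 1)))) with (1 - x * sin t ^ 2) by ring.
    have Hs := sqrt_lt_R0 _ Hw. have Hr := sqrt_sqrt _ (Rlt_le _ _ Hw).
    set r := sqrt (1 - x * sin t ^ 2) in Hs Hr *.
    rewrite Hr.
    transitivity ((((cos t)^2 - sin t^2) * (1 - x * sin t ^ 2) + x * sin t^2 * cos t^2) / ((1 - x * sin t ^ 2)*r)).
    { field. lra. }
    have Hc : cos t ^ 2 = 1 - sin t ^ 2. { have := sin2_cos2 t. rewrite /Rsqr. lra. }
    rewrite Hc. field. lra.
  - intros t _. apply: (ex_derive_continuous (K:=R_AbsRing) (V:=R_NormedModule)).
    have := wpos x t Hx. rewrite /w => Hw. auto_derive. repeat split; try exact I; pos.
Qed.

Lemma RInt_comb2 (f g : R -> R) c1 c2 a b : ex_RInt f a b -> ex_RInt g a b ->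
  RInt (fun t => c1 * f t + c2 * g t) a b = c1 * RInt f a b + c2 * RInt g a b.
Proof. intros H1 H2. apply is_RInt_unique. apply: is_RInt_plus; apply: is_RInt_scal; by apply RInt_correct. Qed.

Lemma RInt_comb3 (f g h : R -> R) c1 c2 c3 a b : ex_RInt f a b -> ex_RInt g a b -> ex_RInt h a b ->
  RInt (fun t => c1 * f t + c2 * g t + c3 * h t) a b = c1 * RInt f a b + c2 * RInt g a b + c3 * RInt h a b.
Proof. intros H1 H2 H3. apply is_RInt_unique. apply: is_RInt_plus; [apply: is_RInt_plus|]; apply: is_RInt_scal; by apply RInt_correct. Qed.

Lemma ex_scal (f : R -> R) c a b : ex_RInt f a b -> ex_RInt (fun t => c * f t) a b.
Proof. intros [l H]. eexists. apply: is_RInt_scal. exact H. Qed.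
Lemma ex_comb2 (f g : R -> R) c1 c2 a b : ex_RInt f a b -> ex_RInt g a b -> ex_RInt (fun t => c1 * f t + c2 * g t) a b.
Proof. intros [l1 H1] [l2 H2]. eexists. apply: is_RInt_plus; apply: is_RInt_scal; eassumption. Qed.

Lemma RInt0 a b : RInt (fun _ => 0) a b = 0.
Proof. rewrite RInt_const. rewrite /scal /= /mult /=. ring. Qed.

Lemma rfacts t : exists r, 0 < r /\ r * r = w x t /\ sqrt (w x t) = r.
Proof. have := wpos x t Hx. rewrite -/(w x t) => Hw. exists (sqrt (w x t)). split; [pos|split; [apply sqrt_sqrt; lra|done]]. Qed.

Lemma L1 : Kt x - Et x = x * Pt x.
Proof.
  have H := RInt_comb3 _ _ _ 1 (-1) (-x) 0 (PI/2) exK exE exP.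
  have H0 : RInt (fun t => 1 * / sqrt (w x t) + -1 * sqrt (w x t) + - x * (sin t ^ 2 / sqrt (w x t))) 0 (PI/2) = 0.
  { transitivity (RInt (fun _ => 0) 0 (PI/2)); last by apply RInt0. apply RInt_extR => t _. have [r [Hr [Hrr ->]]] := rfacts t.
    rewrite /w in Hrr. field_simplify; try lra. replace (r^2) with (r*r) by ring. rewrite Hrr. rewrite /Rdiv. ring. }
  rewrite /Kt /Et /Pt. lra.
Qed.

Lemma L2 : Et x - (1 - x) * Kt x = x * (1 - x) * Qt x.
Proof.
  have H := RInt_comb3 _ _ _ 1 (-(1-x)) (-(x*(1-x))) 0 (PI/2) exE exK exQ.
  have H0 : RInt (fun t => 1 * sqrt (w x t) + -(1-x) * / sqrt (w x t) + -(x*(1-x)) * (sin t ^ 2 / (w x t * sqrt (w x t)))) 0 (PI/2) = x * Zt x.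
  { rewrite /Zt -RInt_scal'; last by apply exZ. apply RInt_extR => t _. have [r [Hr [Hrr ->]]] := rfacts t.
    rewrite -Hrr. rewrite /w in Hrr. field_simplify; try lra. f_equal.
    replace (r^4) with ((r*r)^2) by ring. replace (r^2) with (r*r) by ring. rewrite Hrr. ring. }
  rewrite Zt0 in H0. rewrite /Kt /Et /Qt. lra.
Qed.
End X.

Lemma Ss_val : Ss = PI / 4.
Proof.
  rewrite /Ss.
  have H := is_RInt_derive (fun t => (t - sin t * cos t) / 2) (fun t => sin t ^ 2) 0 (PI/2).
  rewrite (is_RInt_unique _ _ _ _ (H _ _)).
  - rewrite /minus /plus /opp /=. rewrite sin_0 cos_PI2. field.
  - intros t _. auto_derive; first done. have Hc : cos t ^ 2 = 1 - sin t ^ 2. { have := sin2_cos2 t. rewrite /Rsqr. lra. }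
    simpl in Hc. field_simplify. nra.
  - intros t _. apply: (ex_derive_continuous (K:=R_AbsRing) (V:=R_NormedModule)). auto_derive. done.
Qed.


Section Y.
Variable x : R.
Hypothesis Hx : x < 1.

Lemma L3 : Pt x - Kt x + (1 - x) * Qt x = 0.
Proof.
  have H := RInt_comb3 _ _ _ 1 (-1) (1-x) 0 (PI/2) (exP x Hx) (exK x Hx) (exQ x Hx).
  have H0 : RInt (fun t => 1 * (sin t ^ 2 / sqrt (w x t)) + -1 * / sqrt (w x t) + (1-x) * (sin t ^ 2 / (w x t * sqrt (w x t)))) 0 (PI/2) = -1 * Zt x.
  { rewrite /Zt -RInt_scal'; last by apply exZ. apply RInt_extR => t _. have [r [Hr [Hrr ->]]] := rfacts x Hx t.
    rewrite -Hrr. rewrite /w in Hrr. field_simplify; try lra. f_equal.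
    replace (r^2) with (r*r) by ring. rewrite Hrr. ring. }
  rewrite Zt0 in H0 => //. rewrite /Kt /Pt /Qt. lra.
Qed.

Section Z.
Hypothesis Hx0 : 0 <= x.

Lemma rle1 t : forall r, 0 < r -> r * r = w x t -> r <= 1.
Proof. intros r Hr Hrr. have := s_bound t. rewrite /w in Hrr. intros. nra. Qed.

Lemma exs : ex_RInt (fun t => sin t ^ 2) 0 (PI/2).
Proof. apply exRI => t. auto_derive. done. Qed.

Lemma Pge : Ss <= Pt x.
Proof.
  have Hpi := PI_RGT_0. apply RInt_le; [lra|apply exs|apply exP; lra|].
  intros t _. have [r [Hr [Hrr ->]]] := rfacts x Hx t. have := rle1 t r Hr Hrr. have Hs := s_bound t.
  intros. apply (Rmult_le_reg_r r); [lra|]. field_simplify; [|lra]. nra.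
Qed.

Lemma Qge : Ss <= Qt x.
Proof.
  have Hpi := PI_RGT_0. apply RInt_le; [lra|apply exs|apply exQ; lra|].
  intros t _. have [r [Hr [Hrr ->]]] := rfacts x Hx t. have := rle1 t r Hr Hrr. have Hs := s_bound t.
  rewrite -Hrr. intros. apply (Rmult_le_reg_r (r * r * r)); [pos|]. field_simplify; [|lra]. 
  have : r * r * r <= 1. { have : r * r <= 1 by nra. nra. }
  nra.
Qed.

Lemma Sle : St x <= Ss.
Proof.
  have Hpi := PI_RGT_0. apply RInt_le; [lra|apply exS; lra|apply exs|].
  intros t _. have [r [Hr [Hrr ->]]] := rfacts x Hx t. have := rle1 t r Hr Hrr. have Hs := s_bound t. nra.
Qed.

Lemma Ele : Et x <= PI / 2.
Proof.
  have Hpi := PI_RGT_0. transitivity (RInt (fun _ => 1) 0 (PI/2)).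
  - apply RInt_le; [lra|apply exE; lra|apply exRI => t; auto_derive; done|].
    intros t _. have [r [Hr [Hrr ->]]] := rfacts x Hx t. exact (rle1 t r Hr Hrr).
  - rewrite RInt_const /scal /= /mult /=. lra.
Qed.

Lemma Kge : 0 <= Kt x.
Proof.
  have Hpi := PI_RGT_0. rewrite -(RInt0 0 (PI/2)). apply RInt_le; [lra|apply exRI => t; auto_derive; done|apply exK; lra|].
  intros t _. have [r [Hr [Hrr ->]]] := rfacts x Hx t. apply Rlt_le, Rinv_0_lt_compat. lra.
Qed.

Lemma CS : Pt x ^ 2 <= St x * Qt x.
Proof.
  have Hpi := PI_RGT_0.
  have Hpt : forall mu, 0 < mu -> 2 * Pt x <= mu * Qt x + (1/mu) * St x.
  { intros mu Hmu. rewrite /Qt /St -RInt_comb2; [| by apply exQ | by apply exS].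
    rewrite /Pt -RInt_scal'; last by apply exP.
    apply RInt_le; [lra| apply ex_scal; by apply exP | apply ex_comb2; [by apply exQ | by apply exS] |].
    intros t _. have [r [Hr [Hrr ->]]] := rfacts x Hx t. rewrite -Hrr.
    have Hs := s_bound t.
    have E0 : mu * (sin t ^ 2 / (r * r * r)) + 1 / mu * (sin t ^ 2 * r) - 2 * (sin t ^ 2 / r)
       = sin t ^ 2 * (mu - r * r) ^ 2 / (mu * (r * r * r)).
    { field. lra. }
    have : 0 <= sin t ^ 2 * (mu - r * r) ^ 2 / (mu * (r * r * r)).
    { apply Rmult_le_pos. apply Rmult_le_pos; [lra| apply pow2_ge_0]. apply Rlt_le, Rinv_0_lt_compat. pos. }
    lra. }
  have HP : 0 < Pt x.
  { have := Pge. rewrite Ss_val. have := PI_RGT_0. lra. }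
  have HQ : 0 < Qt x.
  { have := Qge. rewrite Ss_val. have := PI_RGT_0. lra. }
  have := Hpt (Pt x / Qt x) (Rdiv_lt_0_compat _ _ HP HQ).
  intros H. 
  have H2 : Pt x <= St x * Qt x / Pt x.
  { have : 1 / (Pt x / Qt x) * St x = St x * Qt x / Pt x by field; lra.
    have : Pt x / Qt x * Qt x = Pt x by field; lra. lra. }
  apply (Rmult_le_compat_r (Pt x)) in H2; [|lra].
  have : St x * Qt x / Pt x * Pt x = St x * Qt x by field; lra.
  nra.
Qed.
End Z.
End Y.

Definition f6t y := (2 - y) * Kt y - 2 * Et y.
Definition ht y := PI / 2 * f6t y - Et y * Et y + (1 - y) * (Kt y * Kt y).

Lemma f6t_der y : y < 1 -> is_derive f6t y (y / 2 * Qt y).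
Proof.
  intros Hy.
  have H1 : is_derive (fun z => 2 - z) y (-1) by auto_derive; [done|ring].
  have H2 : is_derive (fun z : R => 2) y 0 by auto_derive; [done|ring].
  have H := dsub _ _ _ _ _ (dmul _ _ _ _ _ H1 (Kt_der y Hy)) (dmul _ _ _ _ _ H2 (Et_der y Hy)).
  have := L3 y Hy. intros HL.
  replace (y / 2 * Qt y) with (-1 * Kt y + (2 - y) * (1 / 2 * Qt y) - (0 * Et y + 2 * (- (1 / 2) * Pt y))) by lra.
  exact H.
Qed.

Lemma ht_der y : y < 1 -> is_derive ht y (y * (PI / 4 * Qt y - Pt y ^ 2)).
Proof.
  intros Hy.
  have H1 : is_derive (fun z => 1 - z) y (-1) by auto_derive; [done|ring].
  have H2 : is_derive (fun z : R => PI / 2) y 0 by auto_derive; [done|ring].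
  have H := dadd _ _ _ _ _ (dsub _ _ _ _ _ (dmul _ _ _ _ _ H2 (f6t_der y Hy)) (dmul _ _ _ _ _ (Et_der y Hy) (Et_der y Hy)))
     (dmul _ _ _ _ _ H1 (dmul _ _ _ _ _ (Kt_der y Hy) (Kt_der y Hy))).
  have := L3 y Hy. have := L1 y Hy. intros HL1 HL3.
  match type of H with is_derive _ _ ?v => replace (y * (PI / 4 * Qt y - Pt y ^ 2)) with v end.
  exact H.
  have HQ : (1 - y) * Qt y = Kt y - Pt y by lra.
  have HE : Et y = Kt y - y * Pt y by lra.
  rewrite HE. nra.
Qed.

Lemma Kbig m : exists x, 0 < x < 1 /\ m < Kt x.
Proof.
  set q := exp (-(Rabs m + 1)).
  have Hq0 : 0 < q by apply exp_pos.
  have Hq1 : q < 1. { have : exp (-(Rabs m + 1)) < exp 0 by apply exp_increasing; have := Rabs_pos m; lra.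
     rewrite exp_0. done. }
  exists (1 - q ^ 2). split. { split; nra. }
  have Hpi := PI2_1.
  set g := fun t => / sqrt ((PI / 2 - t) ^ 2 + q ^ 2).
  set G := fun t => - ln ((PI / 2 - t) + sqrt ((PI / 2 - t) ^ 2 + q ^ 2)).
  have HI : is_RInt g 0 (PI/2) (minus (G (PI/2)) (G 0)).
  { apply: is_RInt_derive.
    - intros t Ht. rewrite Rmin_left in Ht; [|lra]. rewrite Rmax_right in Ht; [|lra].
      have Hv : 0 < (PI/2 - t) ^ 2 + q ^ 2 by nra.
      have Hs := sqrt_lt_R0 _ Hv. have Hss := sqrt_sqrt _ (Rlt_le _ _ Hv).
      rewrite /G /g. auto_derive.
      + repeat split; try exact I.
        all: try (apply Rgt_not_eq; apply sqrt_lt_R0; nra).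
        all: try (match goal with |- 0 < ?a + sqrt ?b => have : 0 < sqrt b by (apply sqrt_lt_R0; nra) end; lra).
      + nra.
      + have E : (PI / 2 + - t) * ((PI / 2 + - t) * 1) + q * (q * 1) = (PI / 2 - t) ^ 2 + q ^ 2 by ring.
        rewrite E. replace (PI / 2 + - t) with (PI / 2 - t) by ring.
        set r := sqrt ((PI / 2 - t) ^ 2 + q ^ 2) in Hs Hss *.
        field. lra.
    - intros t _. apply: (ex_derive_continuous (K:=R_AbsRing) (V:=R_NormedModule)).
      rewrite /g. auto_derive. have Hp : 0 < (PI / 2 + - t) * ((PI / 2 + - t) * 1) + q * (q * 1) by (have := pow2_ge_0 (PI/2 + -t); simpl; nra). split; [exact Hp|split; [|exact I]]. apply Rgt_not_eq, sqrt_lt_R0, Hp. }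
  have HG : RInt g 0 (PI/2) > m.
  { rewrite (is_RInt_unique _ _ _ _ HI). rewrite /minus /plus /opp /= /G.
    replace (PI / 2 - PI / 2) with 0 by ring. replace (0 ^ 2 + q ^ 2) with (q ^ 2) by ring.
    rewrite sqrt_pow2; [|lra]. rewrite Rplus_0_l /q ln_exp.
    have Hs : 0 < sqrt ((PI / 2 - 0) ^ 2 + q ^ 2) by apply sqrt_lt_R0; nra.
    set z := PI / 2 - 0 + sqrt ((PI / 2 - 0) ^ 2 + q ^ 2).
    have Hz : 1 <= z by rewrite /z; lra.
    have : 0 <= ln z.
    { destruct (Rle_lt_dec 0 (ln z)) as [h|h]; first done.
      have : exp (ln z) < exp 0 by apply exp_increasing. rewrite exp_ln; [|lra]. rewrite exp_0. lra. }
    have := Rle_abs m. lra. }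
  have Hx1 : 1 - q ^ 2 < 1 by nra.
  apply: Rlt_le_trans; first exact HG.
  apply RInt_le; [lra| |apply exK; lra|].
  - apply exRI => t. rewrite /g. auto_derive. have Hp : 0 < (PI / 2 + - t) * ((PI / 2 + - t) * 1) + q * (q * 1) by (have := pow2_ge_0 (PI/2 + -t); simpl; nra). split; [exact Hp|split; [|exact I]]. apply Rgt_not_eq, sqrt_lt_R0, Hp.
  - intros t Ht. rewrite /g. have Hw := wpos (1 - q ^ 2) t Hx1.
    apply Rinv_le_contravar. apply sqrt_lt_R0. exact Hw.
    apply sqrt_le_1_alt. rewrite /w.
    have Hc0 : 0 <= cos t by apply cos_ge_0; lra.
    have Hc1 : cos t < PI / 2 - t by rewrite -sin_shift; apply sin_lt_x; lra.
    have Hc : cos t ^ 2 = 1 - sin t ^ 2. { have := sin2_cos2 t. rewrite /Rsqr. simpl. lra. }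
    have := s_bound t. nra.
Qed.

Lemma w0 t : sqrt (w 0 t) = 1.
Proof. rewrite /w. replace (1 - 0 * sin t ^ 2) with 1 by ring. apply sqrt_1. Qed.

Lemma Kt0 : Kt 0 = PI / 2.
Proof. rewrite /Kt. transitivity (RInt (fun _ => 1) 0 (PI/2)).
  - apply RInt_extR => t _. rewrite w0. apply Rinv_1.
  - rewrite RInt_const /scal /= /mult /=. lra. Qed.
Lemma Et0 : Et 0 = PI / 2.
Proof. rewrite /Et. transitivity (RInt (fun _ => 1) 0 (PI/2)).
  - apply RInt_extR => t _. rewrite w0. done.
  - rewrite RInt_const /scal /= /mult /=. lra. Qed.

Lemma f6t0 : f6t 0 = 0.
Proof. rewrite /f6t Kt0 Et0. ring. Qed.
Lemma ht0 : ht 0 = 0.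
Proof. rewrite /ht f6t0 Kt0 Et0. ring. Qed.

Lemma mvt f df a b : a < b -> b < 1 -> (forall c, c < 1 -> is_derive f c (df c)) ->
  exists c, f b - f a = df c * (b - a) /\ a < c < b.
Proof. intros Hab Hb Hd. apply MVT_cor2; first done. intros c Hc. apply is_derive_Reals. apply Hd. lra. Qed.

Lemma Kdef x : 0 <= x -> K x = Kt x.
Proof. intros H. rewrite /K /calK /Kt. apply RInt_extR => t _. rewrite pow2_sqrt //. Qed.
Lemma Edef x : 0 <= x -> E x = Et x.
Proof. intros H. rewrite /E /calE /Et. apply RInt_extR => t _. rewrite pow2_sqrt //. Qed.
Lemma f6def x : 0 <= x -> f6 x = f6t x.
Proof. intros H. rewrite /f6 /f6t Kdef // Edef //. Qed.

Lemma f6t_pos_der c : 0 < c < 1 -> 0 < c / 2 * Qt c.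
Proof. intros Hc. have := Qge c (proj2 Hc) (Rlt_le _ _ (proj1 Hc)). rewrite Ss_val. have := PI_RGT_0. intros. 
  apply Rmult_lt_0_compat; lra. Qed.

Theorem mainTheorem6 :
  (* (1) strictly increasing on (0,1) ... *)
  ((forall x y : R, 0 < x < 1 -> 0 < y < 1 -> x < y -> f6 x < f6 y) /\
   (* ... and maps (0,1) onto (0,+oo) *)
   (forall x : R, 0 < x < 1 -> 0 < f6 x) /\
   (forall y : R, 0 < y -> exists x : R, 0 < x < 1 /\ f6 x = y)) /\
  (* (2) *)
  (forall x : R, 0 < x < 1 ->
     f6 x >= 2 / PI * (E x ^ 2 - (1 - x) * K x ^ 2)).
Proof.
  have Hpi := PI_RGT_0.
  have Hd := f6t_der.
  split; [split; [|split]|].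
  - intros x y Hx Hy Hxy. rewrite !f6def; try lra.
    have [c [Hc1 Hc2]] := mvt f6t (fun c => c / 2 * Qt c) x y Hxy (proj2 Hy) Hd.
    have := f6t_pos_der c ltac:(lra). nra.
  - intros x Hx. rewrite f6def; try lra.
    have [c [Hc1 Hc2]] := mvt f6t (fun c => c / 2 * Qt c) 0 x (proj1 Hx) (proj2 Hx) Hd.
    have := f6t_pos_der c ltac:(lra). rewrite f6t0 in Hc1. nra.
  - intros y Hy. have [b [Hb HK]] := Kbig (y + PI).
    have Hfb : f6t b > y.
    { have := Ele b (proj2 Hb) (Rlt_le _ _ (proj1 Hb)). have := Kge b (proj2 Hb).
      rewrite /f6t. intros. nra. }
    have Hcont : forall a, 0 <= a <= b -> continuity_pt (fun z => f6t z - y) a.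
    { intros a Ha. apply cpt_of_ex. apply: (ex_derive_minus (K:=R_AbsRing) (V:=R_NormedModule)).
      eexists. apply Hd. lra. apply ex_derive_const. }
    have Hg0 : f6t 0 - y < 0 by rewrite f6t0; lra.
    have [z [Hz1 Hz2]] := Ranalysis5.IVT_interv (fun z => f6t z - y) 0 b Hcont (proj1 Hb) Hg0 ltac:(lra).
    have Hz0 : z <> 0. { intros ->. lra. }
    exists z. split; [lra|]. rewrite f6def; lra.
  - intros x Hx. rewrite f6def ?Edef ?Kdef; try lra.
    have [c [Hc1 Hc2]] := mvt ht (fun c => c * (PI / 4 * Qt c - Pt c ^ 2)) 0 x (proj1 Hx) (proj2 Hx) ht_der.
    rewrite ht0 in Hc1.
    have Hc : c < 1 by lra. have Hc0 : 0 <= c by lra.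
    have H1 := CS c Hc Hc0. have H2 := Sle c Hc Hc0. have H3 := Qge c Hc Hc0. rewrite Ss_val in H2 H3.
    have : PI / 4 * Qt c - Pt c ^ 2 >= 0 by nra.
    intros H4. have Hh : 0 <= ht x. { have -> : ht x = c * (PI / 4 * Qt c - Pt c ^ 2) * x by lra. apply Rmult_le_pos; [apply Rmult_le_pos|]; lra. }
    rewrite /ht in Hh. apply Rle_ge.
    have -> : f6t x = 2 / PI * (PI / 2 * f6t x) by field; lra.
    apply Rmult_le_compat_l. { apply Rlt_le. apply Rdiv_lt_0_compat; lra. }
    simpl. nra.
Qed.
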